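(* Let $F\subset S^D_+$ be closed, $x_0\in F$, and let $\varphi:(\mathcal M_1(F),|\cdot|_{\mathcal M})\to\mathbb{R}$ be $1$-Lipschitz. For every $\chi\in\mathcal L(F)$ with $|\chi|_{\mathcal L}>1$, we have $\varphi_*(\chi)=-\infty$.
   Context: $S^D_+$ is the positive semidefinite cone of symmetric $D\times D$ matrices with Frobenius norm $|\cdot|$. $\mathcal L(F)$: Lipschitz $\chi:F\to\mathbb{R}$ with $|\chi|_{\mathcal L}=\max\{|\chi(x_0)|,|\chi|_{\mathrm{Lip}}\}$; $\mathcal L_{\le1}(F)$ its unit ball. For signed Borel measures $\nu$ on $F$ with finite first moment, $|\nu|_{\mathcal M}=\sup_{\chi\in\mathcal L_{\le1}(F)}\int\chi\,\mathrm d\nu$, and $\mathcal M_1(F)$ is the completion under this norm (integrals of $\chi\in\mathcal L(F)$ extended by continuity). The concave conjugate is $\varphi_*(\chi)=\inf_{\mu\in\mathcal M_1(F)}\{\int\chi\,\mathrm d\mu-\varphi(\mu)\}$. *)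

(* Defs.v *)
From HB Require Import structures.
From mathcomp Require Import all_boot all_order all_algebra.
From mathcomp Require Import all_classical all_reals all_analysis.
Set Implicit Arguments. Unset Strict Implicit. Unset Printing Implicit Defensive.
Import Order.TTheory GRing.Theory Num.Theory.
Import numFieldTopology.Exports numFieldNormedType.Exports.
Local Open Scope classical_set_scope.
Local Open Scope ring_scope.

Section Defs.
Variables (R : realType) (D : nat).

Definition frob (A : 'M[R]_D) : R := Num.sqrt (\sum_i \sum_j A i j ^+ 2).

Definition psd_cone : set 'M[R]_D :=
  [set A | A^T = A /\ forall v : 'cV[R]_D, 0 <= (v^T *m A *m v) ord0 ord0].

(* Borel sigma-algebra on the space of D x D matrices (generated by the open
   sets of the standard (product = Frobenius) topology). *)
Definition Mborel := g_sigma_algebraType (open : set (set 'M[R]_(D, D))).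

Variables (F : set 'M[R]_D) (x0 : 'M[R]_D).

Definition lipF (chi : 'M[R]_D -> R) : Prop :=
  exists C : R, forall x y, F x -> F y -> `|chi x - chi y| <= C * frob (x - y).

Definition lip_semi (chi : 'M[R]_D -> R) : R :=
  sup [set r | exists x y, [/\ F x, F y, x != y & r = `|chi x - chi y| / frob (x - y)]].

Definition lipL_norm (chi : 'M[R]_D -> R) : R := Num.max `|chi x0| (lip_semi chi).

Definition Lunit : set ('M[R]_D -> R) := [set chi | lipF chi /\ lipL_norm chi <= 1].

(* A signed Borel measure as a pair (positive part, negative part). *)
Record smeasure := SMeasure {
  smp : {measure set Mborel -> \bar R};
  smn : {measure set Mborel -> \bar R} }.

Definition fm_measure (mu : {measure set Mborel -> \bar R}) : Prop :=
  [/\ (mu setT < +oo)%E, mu (~` F) = 0%E &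
      (\int[mu]_(x in (F : set Mborel)) (frob (x - x0))%:E < +oo)%E].

Definition sm_valid (nu : smeasure) : Prop := fm_measure (smp nu) /\ fm_measure (smn nu).

Definition sint (chi : 'M[R]_D -> R) (nu : smeasure) : R :=
  fine (\int[smp nu]_(x in (F : set Mborel)) (chi x)%:E)
  - fine (\int[smn nu]_(x in (F : set Mborel)) (chi x)%:E).

Definition dM (nu1 nu2 : smeasure) : R :=
  sup [set sint chi nu1 - sint chi nu2 | chi in Lunit].

(* Completion M_1(F): Cauchy sequences (for |.|_M) of valid signed measures;
   two sequences at distance 0 represent the same element. *)
Definition M1 : set (nat -> smeasure) :=
  [set u | (forall n, sm_valid (u n)) /\
     forall e : R, 0 < e -> exists N : nat, forall m n : nat,
       (N <= m)%N -> (N <= n)%N -> dM (u m) (u n) <= e].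

Definition dM1 (u v : nat -> smeasure) : R := limn (fun n => dM (u n) (v n)).

(* Integral of chi against an element of the completion (extension by continuity). *)
Definition M1int (chi : 'M[R]_D -> R) (u : nat -> smeasure) : R :=
  limn (fun n => sint chi (u n)).

Definition conc_conj (phi : (nat -> smeasure) -> R) (chi : 'M[R]_D -> R) : \bar R :=
  ereal_inf [set (M1int chi u - phi u)%:E | u in M1].

End Defs.

(* Main.v *)
Require Import Defs.
From HB Require Import structures.
From mathcomp Require Import all_boot all_order all_algebra.
From mathcomp Require Import all_classical all_reals all_analysis.
From mathcomp Require Import measurable_realfun lra.
Import Order.TTheory GRing.Theory Num.Theory.
Import numFieldTopology.Exports numFieldNormedType.Exports.
Local Open Scope classical_set_scope.
Local Open Scope ring_scope.
Import HBNNSimple.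

Definition sd {R : realType} {D : nat} (t : {nonneg R}) (a : Mborel R D) :
  {measure set Mborel R D -> \bar R} := mscale t (@dirac _ (Mborel R D) a R).

Lemma int_nnsfun_sd {R : realType} {D : nat} (t : {nonneg R}) (a : Mborel R D)
  (h : {nnsfun Mborel R D >-> R}) :
  sintegral (sd t a) h = (t%:num * h a)%:E.
Proof.
have := integral_nnsfun (sd t a) measurableT h; rewrite patch_setT => <-.
rewrite ge0_integral_mscale //=; last 2 first.
- by apply: measurableT_comp => //; exact: measurable_funPT.
- by move=> x _; rewrite lee_fin.
rewrite (@integral_dirac _ _ a R setT measurableT (fun x => (h x)%:E)).
  by rewrite diracT mul1e.
by apply: measurableT_comp => //; exact: measurable_funPT.
Qed.

Lemma mset1 {R : realType} {D : nat} (a : Mborel R D) : measurable [set a].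
Proof.
rewrite -[[set a]]setCK; apply: measurableC; apply: sub_sigma_algebra.
apply: closed_openC; apply: compact_closed; first exact: norm_hausdorff.
exact: compact_set1.
Qed.

Lemma int_sd_ge0 {R : realType} {D : nat} (t : {nonneg R}) (a : Mborel R D)
  (A : set (Mborel R D)) (g : Mborel R D -> \bar R) (r : R) :
  A a -> (forall x, A x -> (0 <= g x)%E) -> g a = r%:E ->
  (\int[sd t a]_(x in A) g x = (t%:num * r)%:E)%E.
Proof.
move=> Aa g0 gar.
have r0 : 0 <= r by rewrite -lee_fin -gar; exact: g0.
rewrite ge0_integralE //; apply/eqP; rewrite eq_le; apply/andP; split.
  apply: ge_ereal_sup => _ [h hle <-].
  rewrite int_nnsfun_sd lee_fin ler_wpM2l //.
  have := hle a; rewrite /patch mem_set // gar lee_fin; exact.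
apply: ereal_sup_ubound => /=.
exists (scale_nnsfun (indic_nnsfun R (mset1 a)) r0).
  move=> x /=; rewrite /patch mindicE.
  case: (boolP (x \in [set a])) => [/set_mem -> | _].
    by rewrite mem_set // gar mulr1.
  rewrite mulr0; case: ifPn => // /set_mem Ax; exact: g0.
by rewrite (int_nnsfun_sd t a) /= mindicE mem_set // mulr1.
Qed.

Lemma maxeEFin {R : realType} (r : R) : maxe r%:E 0%E = (Num.max r 0)%:E.
Proof. by rewrite !maxEle lee_fin; case: ifP. Qed.

Lemma int_sd {R : realType} {D : nat} (t : {nonneg R}) (a : Mborel R D)
  (A : set (Mborel R D)) (f : Mborel R D -> R) :
  A a -> (\int[sd t a]_(x in A) (f x)%:E = (t%:num * f a)%:E)%E.
Proof.
move=> Aa; rewrite integralE.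
rewrite (@int_sd_ge0 _ _ t a A _ (Num.max (f a) 0)) //; last by rewrite funeposE maxeEFin.
rewrite (@int_sd_ge0 _ _ t a A _ (Num.max (- f a) 0)) //; last by rewrite funenegE maxeEFin.
rewrite -EFinB -mulrBr; congr (_ * _)%:E.
rewrite !maxEle; case: ifP => h1; case: ifP => h2; lra.
Qed.

Lemma frob_ge0 {R : realType} {D : nat} (A : 'M[R]_D) : 0 <= frob A.
Proof. exact: sqrtr_ge0. Qed.

Lemma frobN {R : realType} {D : nat} (A : 'M[R]_D) : frob (- A) = frob A.
Proof.
rewrite /frob; congr Num.sqrt; apply: eq_bigr => i _; apply: eq_bigr => j _.
by rewrite mxE sqrrN.
Qed.

Lemma frob_gt0 {R : realType} {D : nat} (A : 'M[R]_D) : A != 0 -> 0 < frob A.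
Proof.
move=> A0; rewrite /frob sqrtr_gt0 lt_neqAle sumr_ge0 ?andbT; last first.
  by move=> i _; apply: sumr_ge0 => j _; exact: sqr_ge0.
apply/negP => /eqP /esym H; move/negP: A0; apply; apply/eqP/matrixP => i j.
have Hi : \sum_j A i j ^+ 2 = 0.
  by apply: (psumr_eq0P _ H) => // k _; apply: sumr_ge0 => l _; exact: sqr_ge0.
have : A i j ^+ 2 = 0.
  by apply: (psumr_eq0P _ Hi) => // k _; exact: sqr_ge0.
by rewrite mxE => /eqP; rewrite sqrf_eq0 => /eqP.
Qed.

Lemma sup_le {R : realType} (S : set R) (b : R) :
  0 <= b -> (forall y, S y -> y <= b) -> sup S <= b.
Proof.
move=> b0 Sb; have [->|/set0P S0] := eqVneq S set0; first by rewrite sup0.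
exact: ge_sup.
Qed.

Lemma lip_ub {R : realType} {D : nat} (F : set 'M[R]_D) (f : 'M[R]_D -> R) p q :
  lipF F f -> F p -> F q -> p != q ->
  `|f p - f q| / frob (p - q) <= lip_semi F f.
Proof.
move=> [C HC] Fp Fq pq; apply: ub_le_sup; last by exists p, q.
exists C => _ [x [y [Fx Fy xy ->]]].
have fp : 0 < frob (x - y) by apply: frob_gt0; rewrite subr_eq0.
by rewrite ler_pdivrMr // HC.
Qed.

Lemma Lunit_bound {R : realType} {D : nat} (F : set 'M[R]_D) x0 (f : 'M[R]_D -> R) :
  Lunit F x0 f -> `|f x0| <= 1 /\
    forall p q, F p -> F q -> `|f p - f q| <= frob (p - q).
Proof.
case=> Hl; rewrite /lipL_norm ge_max => /andP[h1 h2]; split => // p q Fp Fq.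
have [->|pq] := eqVneq p q; first by rewrite !subrr normr0 frob_ge0.
have fp : 0 < frob (p - q) by apply: frob_gt0; rewrite subr_eq0.
rewrite -[frob _]mul1r -ler_pdivrMr //; apply: le_trans h2.
exact: lip_ub.
Qed.

Lemma fm_sd {R : realType} {D : nat} (F : set 'M[R]_D) x0 t (a : Mborel R D) :
  F a -> fm_measure F x0 (sd t a).
Proof.
move=> Fa; split.
- by rewrite /= /mscale /= diracT mule1 ltry.
- by rewrite /= /mscale /= diracE memNset ?mule0.
- by rewrite (int_sd t a) // ltry.
Qed.

Lemma sint_sd {R : realType} {D : nat} (F : set 'M[R]_D) (f : 'M[R]_D -> R) t s
  (p q : Mborel R D) : F p -> F q ->
  sint F f (SMeasure (sd t p) (sd s q)) = t%:num * f p - s%:num * f q.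
Proof. by move=> Fp Fq; rewrite /sint /= !int_sd. Qed.

Lemma Nle_norm {R : realType} (x : R) : - x <= `|x|.
Proof. by have := ler_norm (- x); rewrite normrN. Qed.

Lemma M1_cst {R : realType} {D : nat} (F : set 'M[R]_D) x0 (u : smeasure R D) :
  sm_valid F x0 u -> M1 F x0 (fun _ => u).
Proof.
move=> hu; split => // e e0; exists 0%N => m n _ _.
by apply: sup_le (ltW e0) _ => _ [f _ <-]; rewrite subrr ltW.
Qed.

Lemma limn_cst {R : realType} (c : R) : limn (fun _ : nat => c) = c.
Proof. by apply: cvg_lim => //; exact: cvg_cst. Qed.

Lemma all_le_Ny {R : realType} (x : \bar R) : (forall M : R, (x <= M%:E)%E) -> x = -oo%E.
Proof.
case: x => [r||] // H.
  by have := H (r - 1); rewrite lee_fin => ?; clear H; exfalso; lra.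
by have := H 0; rewrite leye_eq.
Qed.

Lemma key_data {R : realType} {D : nat} (F : set 'M[R]_D) x0 (chi : 'M[R]_D -> R) :
  F x0 -> lipF F chi -> 1 < lipL_norm F x0 chi ->
  exists p q al be d s, F p /\ F q /\ 0 <= al /\ 0 <= be /\ 0 <= d /\ d < s /\
    al * chi p - be * chi q = - s /\
    (forall f, Lunit F x0 f -> al * f p - be * f q <= d).
Proof.
move=> Fx0 Hl; rewrite /lipL_norm lt_max => /orP[H1|H2].
  have [hc|hc] := lerP 0 (chi x0).
    rewrite ger0_norm // in H1.
    exists x0, x0, 0, 1, 1, (chi x0); do 7 (split => //); first by rewrite mul0r mul1r sub0r.
    move=> f /Lunit_bound [hf _]; rewrite mul0r mul1r sub0r.
    exact: le_trans (Nle_norm _) hf.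
  rewrite ltr0_norm // in H1.
  exists x0, x0, 1, 0, 1, (- chi x0); do 7 (split => //); first by rewrite mul0r mul1r subr0 opprK.
  move=> f /Lunit_bound [hf _]; rewrite mul0r mul1r subr0.
  exact: le_trans (ler_norm _) hf.
have S0 : [set r | exists x y, [/\ F x, F y, x != y & r = `|chi x - chi y| / frob (x - y)]] !=set0.
  apply/set0P/negP => /eqP E; move: H2; rewrite /lip_semi E sup0.
  by rewrite ltr10.
have [_ [x [y [Fx Fy xy ->]]] hr] := sup_gt S0 H2.
have fp : 0 < frob (x - y) by apply: frob_gt0; rewrite subr_eq0.
rewrite ltr_pdivlMr // mul1r in hr.
have [hc|hc] := lerP (chi y) (chi x).
  rewrite ger0_norm ?subr_ge0 // in hr.
  exists y, x, 1, 1, (frob (y - x)), (chi x - chi y).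
  do 4 (split => //); split; first exact: frob_ge0.
  split; first by rewrite -opprB frobN.
  split; first by rewrite !mul1r opprB.
  - move=> f /Lunit_bound [_ hf]; rewrite !mul1r.
    exact: le_trans (ler_norm _) (hf _ _ Fy Fx).
rewrite distrC ger0_norm ?subr_ge0 ?ltW // in hr.
exists x, y, 1, 1, (frob (x - y)), (chi y - chi x).
do 4 (split => //); split; first exact: frob_ge0.
split => //; split; first by rewrite !mul1r opprB.
- move=> f /Lunit_bound [_ hf]; rewrite !mul1r.
  exact: le_trans (ler_norm _) (hf _ _ Fx Fy).
Qed.

Theorem proposition3p4 (R : realType) (D : nat) (F : set 'M[R]_D) (x0 : 'M[R]_D)
  (phi : (nat -> smeasure R D) -> R) (chi : 'M[R]_D -> R) :
  closed F -> F `<=` @psd_cone R D -> F x0 ->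
  (forall u v, M1 F x0 u -> M1 F x0 v -> `|phi u - phi v| <= dM1 F x0 u v) ->
  lipF F chi -> 1 < lipL_norm F x0 chi ->
  conc_conj F x0 phi chi = -oo%E.
Proof.
move=> _ _ Fx0 Hphi Hl Hgt.
have [p [q [al [be [d [s [Fp [Fq [al0 [be0 [d0 [ds [Hs Hb]]]]]]]]]]]]] :=
  key_data F x0 chi Fx0 Hl Hgt.
pose Z := SMeasure (sd (NngNum (lexx (0 : R))) x0) (sd (NngNum (lexx (0 : R))) x0).
have sZ f : sint F f Z = 0 by rewrite sint_sd //= !mul0r subrr.
have MZ : M1 F x0 (fun _ => Z) by apply: M1_cst; split; apply: fm_sd.
apply: all_le_Ny => M.
have sd0 : 0 < s - d by rewrite subr_gt0.
pose t := (`|M| + `|phi (fun _ => Z)|) / (s - d).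
have ht : 0 <= t by apply: divr_ge0; [exact: addr_ge0 | exact: ltW].
pose U := SMeasure (sd (NngNum (mulr_ge0 ht al0)) p) (sd (NngNum (mulr_ge0 ht be0)) q).
have sU f : sint F f U = t * (al * f p - be * f q).
  by rewrite sint_sd //= mulrBr !mulrA.
have MU : M1 F x0 (fun _ => U) by apply: M1_cst; split; apply: fm_sd.
apply: le_trans (ereal_inf_lbound _) _.
  by exists (fun _ => U).
rewrite lee_fin.
have hUZ : dM1 F x0 (fun _ => U) (fun _ => Z) <= t * d.
  rewrite /dM1 limn_cst; apply: sup_le; first exact: mulr_ge0.
  move=> _ [f Hf <-]; rewrite sU sZ subr0; apply: ler_wpM2l => //; exact: Hb.
have := Hphi _ _ MU MZ; move=> /le_trans /(_ hUZ) /ler_normlP [h1 h2].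
rewrite /M1int limn_cst sU Hs.
have et : t * (s - d) = `|M| + `|phi (fun _ => Z)|.
  by rewrite /t mulrAC -mulrA divff ?mulr1 // gt_eqF.
have := Nle_norm M; have := Nle_norm (phi (fun _ => Z)).
move: et h1 h2; rewrite mulrBr mulrN.
set a := t * s; set b := t * d; set pu := phi _; set pz := phi _.
move=> *; lra.
Qed.
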